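(* Fix $\kappa\ge 2$ and a finite taxon set $X$. Let $\psi^+$ be a rooted binary topological tree on $X$. Then for generic $P\in \mathrm{UE}_\kappa(\psi^+)$, one has $P\notin \mathrm{UE}_\kappa(\phi^+)$ for every rooted binary topological tree $\phi^+\neq\psi^+$ on $X$; that is, $\psi^+$ is identifiable from a generic distribution in the UE model. More precisely, for each $\phi^+\ne\psi^+$, $\mathrm{UE}_\kappa(\psi^+)\cap \mathrm{UE}_\kappa(\phi^+)$ has Lebesgue measure zero within $\mathrm{UE}_\kappa(\psi^+)$ (measure taken with respect to the dimension of $\mathrm{UE}_\kappa(\psi^+)$).
   Context: A $\kappa$-state site pattern probability tensor on a finite taxon set $X$ is an $|X|$-way $\kappa\times\cdots\times\kappa$ real array $P$, with one index for each taxon, whose entries are non-negative and sum to 1; $p_{i_1\dots i_n}$ is the probability that the taxa are in states $(i_1,\dots,i_n)$. For $Y\subseteq X$, $P_Y$ denotes the marginalization of $P$ to the taxa in $Y$ (summing over the indices of taxa not in $Y$). For a rooted tree $\psi^+$ on $X$ and $Y\subseteq X$, $\psi^+|_Y$ is the induced rooted subtree on $Y$. A 2-clade (cherry) of a rooted tree is a pair of leaves $\{a,b\}$ that are exactly the leaf descendants of some vertex. The $\kappa$-state ultrametric exchangeable model $\mathrm{UE}_\kappa(\psi^+)$ of a rooted binary topological tree $\psi^+$ on $X$ is the set of all $\kappa$-state site pattern probability tensors $P$ on $X$ such that for every $Y\subseteq X$ and every 2-clade $\{a,b\}$ of $\psi^+|_Y$, $P_Y$ is invariant under exchanging the indices corresponding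 to $a$ and $b$. It is the intersection of an affine linear space with the probability simplex. *)

(* Defs.v *)
From HB Require Import structures.
From mathcomp Require Import all_boot all_order all_algebra.
From mathcomp Require Import reals.
Set Implicit Arguments. Unset Strict Implicit. Unset Printing Implicit Defensive.
Import Order.TTheory GRing.Theory Num.Theory.
Local Open Scope ring_scope.

(* A rooted leaf-labelled topological tree on X is represented by its set of *)
(* clusters (clades): the sets of leaf descendants of its vertices.          *)
Definition compatible (X : finType) (A B : {set X}) : bool :=
  [|| A \subset B, B \subset A | [disjoint A & B]].

Definition is_rooted_binary_tree (X : finType) (H : {set {set X}}) : Prop :=
  [/\ [set: X] \in H,
      (forall x : X, [set x] \in H),
      (forall C, C \in H -> C != set0),
      (forall A B, A \in H -> B \in H -> compatible A B) &
      (* every vertex with >= 2 leaf descendants has exactly two children *)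
      (forall C, C \in H -> (2 <= #|C|)%N ->
        exists A B, [/\ A \in H, B \in H, [disjoint A & B] & A :|: B = C])].

(* clusters of the induced rooted subtree psi|_Y *)
Definition restrict_tree (X : finType) (H : {set {set X}}) (Y : {set X})
  : {set {set X}} := [set C :&: Y | C in H & C :&: Y != set0].

Definition is_2clade (X : finType) (H : {set {set X}}) (Y : {set X}) (a b : X)
  : Prop := a != b /\ [set a; b] \in restrict_tree H Y.

Definition tensor (R : realType) (X : finType) (k : nat) :=
  {ffun {ffun X -> 'I_k} -> R}.

Definition is_prob_tensor (R : realType) (X : finType) (k : nat)
  (P : tensor R X k) : Prop :=
  (forall s, 0 <= P s) /\ \sum_s P s = 1.

(* marginal P_Y, evaluated at a pattern s (depends only on s restricted to Y) *)
Definition marginal (R : realType) (X : finType) (k : nat)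
  (P : tensor R X k) (Y : {set X}) (s : {ffun X -> 'I_k}) : R :=
  \sum_(t : {ffun X -> 'I_k} | [forall y in Y, t y == s y]) P t.

Definition swap_pattern (X : finType) (k : nat) (a b : X)
  (s : {ffun X -> 'I_k}) : {ffun X -> 'I_k} :=
  [ffun x => if x == a then s b else if x == b then s a else s x].

Definition UE (R : realType) (X : finType) (k : nat) (H : {set {set X}})
  (P : tensor R X k) : Prop :=
  is_prob_tensor P /\
  forall (Y : {set X}) (a b : X), is_2clade H Y a b ->
    forall s, marginal P Y (swap_pattern a b s) = marginal P Y s.

Definition in_box (R : realType) (d : nat) (a b v : 'rV[R]_d) : Prop :=
  forall i, a 0 i <= v 0 i <= b 0 i.

Definition box_vol (R : realType) (d : nat) (a b : 'rV[R]_d) : R :=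
  \prod_(i < d) (b 0 i - a 0 i).

Definition lebesgue_null (R : realType) (d : nat) (A : 'rV[R]_d -> Prop)
  : Prop :=
  forall eps : R, 0 < eps -> exists a b : nat -> 'rV[R]_d,
    [/\ (forall n i, a n 0 i <= b n 0 i),
        (forall v, A v -> exists n, in_box (a n) (b n) v) &
        (forall N, \sum_(n < N) box_vol (a n) (b n) <= eps)].

Definition affine_map (R : realType) (X : finType) (k d : nat)
  (c : tensor R X k) (e : 'I_d -> tensor R X k) (v : 'rV[R]_d)
  : tensor R X k :=
  [ffun s => c s + \sum_(i < d) v 0 i * e i s].

(* Main.v *)
Require Import Defs.
From HB Require Import structures.
From mathcomp Require Import all_boot all_order all_algebra.
From mathcomp Require Import reals ring lra.
Import Order.TTheory GRing.Theory Num.Theory.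
Local Open Scope ring_scope.
Set Implicit Arguments. Unset Strict Implicit. Unset Printing Implicit Defensive.

Definition agree (X : finType) (k : nat) (Y : {set X}) (t s : {ffun X -> 'I_k}) :=
  [forall y in Y, t y == s y].

Lemma marg_reindex (R : realType) (X : finType) (k : nat) (P : tensor R X k)
  (Y : {set X}) (s1 s2 : {ffun X -> 'I_k}) (sg : {ffun X -> 'I_k} -> {ffun X -> 'I_k}) :
  involutive sg -> (forall t, P (sg t) = P t) ->
  (forall t, agree Y t s2 = agree Y (sg t) s1) ->
  marginal P Y s2 = marginal P Y s1.
Proof.
move=> inv hP hag; rewrite /marginal (reindex_inj (inv_inj inv)) /=.
apply: eq_big => t; last by move=> _; rewrite hP.
by have := hag (sg t); rewrite inv /agree => ->.
Qed.

Lemma swapK (X : finType) (k : nat) (a b : X) : involutive (@swap_pattern X k a b).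
Proof.
move=> s; apply/ffunP => x; rewrite !ffunE.
case: (eqVneq x a) => [->|xa]; rewrite ?eqxx.
  by case: (eqVneq a b) => [->|].
case: (eqVneq x b) => [->|xb]; rewrite ?eqxx //.

Qed.

Lemma agree_swap (X : finType) (k : nat) (Y : {set X}) (a b : X) (t s : {ffun X -> 'I_k}) :
  a \in Y -> b \in Y -> agree Y t (swap_pattern a b s) -> agree Y (swap_pattern a b t) s.
Proof.
move=> aY bY /forallP h; apply/forallP => w; apply/implyP => wY.
have ha := implyP (h a) aY; have hb := implyP (h b) bY; have hw := implyP (h w) wY.
move: ha hb hw; rewrite !ffunE eqxx.
case: (eqVneq w a) => [->|wa].
  by case: (eqVneq b a) => [->|ba]; rewrite ?eqxx // => _ /eqP ->.
case: (eqVneq w b) => [->|wb]; first by case: (eqVneq b a) => // ba; rewrite eqxx => /eqP ->.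
by [].
Qed.

Lemma marg_swap_sym (R : realType) (X : finType) (k : nat) (P : tensor R X k)
  (Y : {set X}) (a b : X) (s : {ffun X -> 'I_k}) :
  a \in Y -> b \in Y -> (forall t, P (swap_pattern a b t) = P t) ->
  marginal P Y (swap_pattern a b s) = marginal P Y s.
Proof.
move=> aY bY hP; apply: (marg_reindex (swapK a b)) => // t.
apply/idP/idP; first exact: agree_swap.
by move=> h; rewrite -[t](swapK a b) agree_swap // swapK.
Qed.

Lemma swap_patternC (X : finType) (k : nat) (a b : X) (s : {ffun X -> 'I_k}) :
  swap_pattern a b s = swap_pattern b a s.
Proof.
apply/ffunP => w; rewrite !ffunE.
case: (eqVneq w a) => [->|wa]; case: (eqVneq a b) => [->|ab] //.
Qed.

Definition Sd (X : finType) (k : nat) (D : {set X}) (t : {ffun X -> 'I_k}) : bool :=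
  [forall w, (t w <= 1)%N] && [forall w in D, forall w' in D, t w == t w'].

Definition Pd (R : realType) (X : finType) (k : nat) (D : {set X}) : tensor R X k :=
  [ffun t => (Sd D t)%:R / (#|[set t : {ffun X -> 'I_k} | Sd D t]|)%:R].

Definition blk (X : finType) (k : nat) (D : {set X}) (a b : X) (t : {ffun X -> 'I_k}) :
  {ffun X -> 'I_k} :=
  [ffun w => if w == b then t a else if w \in D then
     (if t w == t a then t b else if t w == t b then t a else t w) else t w].

Lemma blkK (X : finType) (k : nat) (D : {set X}) (a b : X) :
  a \in D -> b \notin D -> involutive (@blk X k D a b).
Proof.
move=> aD bD t; apply/ffunP => w.
have ab : a != b by apply: contraNneq bD => <-.
rewrite !ffunE eqxx (negPf ab) aD eqxx.
case: (eqVneq w b) => [->|wb] //.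
case: (boolP (w \in D)) => wD //.
case: (eqVneq (t w) (t a)) => [->|twa]; first by rewrite eqxx; case: (eqVneq (t a) (t b)).
case: (eqVneq (t w) (t b)) => [->|twb].
  by rewrite eqxx; case: (eqVneq (t a) (t b)) => [->|].
by rewrite (negPf twa) (negPf twb).
Qed.

Lemma Sd_blk (X : finType) (k : nat) (D : {set X}) (a b : X) (t : {ffun X -> 'I_k}) :
  b \notin D -> Sd D t -> Sd D (blk D a b t).
Proof.
move=> bD /andP [/forallP h1 /forall_inP h2]; apply/andP; split.
  apply/forallP => w; rewrite ffunE.
  by do ![case: ifP => _]; apply: h1.
apply/forall_inP => w wD; apply/forall_inP => w' w'D.
have wb : (w == b) = false by apply/negbTE; apply: contraNneq bD => <-.
have w'b : (w' == b) = false by apply/negbTE; apply: contraNneq bD => <-.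
by rewrite !ffunE wb w'b wD w'D (eqP (forall_inP (h2 w wD) w' w'D)).
Qed.

Lemma agree_blk (X : finType) (k : nat) (D Y : {set X}) (a b : X) (t s : {ffun X -> 'I_k}) :
  a \in Y -> b \in Y -> a \in D -> b \notin D ->
  (forall w, w \in Y -> w \in D -> w = a) ->
  agree Y t (swap_pattern a b s) -> agree Y (blk D a b t) s.
Proof.
move=> aY bY aD bD hY /forallP h; apply/forallP => w; apply/implyP => wY.
have ab : a != b by apply: contraNneq bD => <-.
have ha := implyP (h a) aY; have hb := implyP (h b) bY; have hw := implyP (h w) wY.
move: ha hb hw; rewrite !ffunE eqxx [b == a]eq_sym (negPf ab) eqxx.
case: (eqVneq w b) => [->|wb]; first by move=> ->.
case: (boolP (w \in D)) => wD.
  by have -> := hY w wY wD; rewrite eqxx eqxx.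
have wa : w != a by apply: contraNneq wD => ->.
by rewrite (negPf wa).
Qed.

Lemma Sd_swap (X : finType) (k : nat) (D : {set X}) (a b : X) (t : {ffun X -> 'I_k}) :
  (a \in D) = (b \in D) -> Sd D t -> Sd D (swap_pattern a b t).
Proof.
move=> hab /andP [/forallP h1 /forall_inP h2]; apply/andP; split.
  by apply/forallP => w; rewrite ffunE; do ![case: ifP => _]; apply: h1.
pose pi w := if w == a then b else if w == b then a else w.
have hpi : forall w, w \in D -> pi w \in D.
  move=> w wD; rewrite /pi; case: (eqVneq w a) => [wa|wa]; first by rewrite -hab -wa.
  by case: (eqVneq w b) => [wb|wb] //; rewrite hab -wb.
have ht : forall w, swap_pattern a b t w = t (pi w).
  by move=> w; rewrite ffunE /pi; do ![case: ifP => _].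
apply/forall_inP => w wD; apply/forall_inP => w' w'D.
by rewrite !ht; apply: (forall_inP (h2 _ (hpi w wD))); apply: hpi.
Qed.

Lemma Pd_inv (R : realType) (X : finType) (k : nat) (D : {set X})
  (sg : {ffun X -> 'I_k} -> {ffun X -> 'I_k}) :
  involutive sg -> (forall t, Sd D t -> Sd D (sg t)) ->
  forall t, Pd R k D (sg t) = Pd R k D t.
Proof.
move=> inv h t; rewrite !ffunE.
have -> // : Sd D (sg t) = Sd D t.
apply/idP/idP; last exact: h.
by move=> /h; rewrite inv.
Qed.

Lemma Pd_prob (R : realType) (X : finType) (k : nat) (D : {set X}) :
  (0 < k)%N -> is_prob_tensor (Pd R k D).
Proof.
move=> k0; split; first by move=> t; rewrite ffunE divr_ge0 ?ler0n.
pose t0 : {ffun X -> 'I_k} := [ffun _ => Ordinal k0].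
have St0 : Sd D t0.
  apply/andP; split; first by apply/forallP => w; rewrite ffunE.
  by apply/forall_inP => w _; apply/forall_inP => w' _; rewrite !ffunE.
have n0 : (0 < #|[set t : {ffun X -> 'I_k} | Sd D t]|)%N.
  by apply/card_gt0P; exists t0; rewrite inE.
have hs : \sum_(t : {ffun X -> 'I_k}) ((Sd D t)%:R : R) = (#|[set t : {ffun X -> 'I_k} | Sd D t]|)%:R.
  rewrite -sum1_card natr_sum [RHS]big_mkcond /=; apply: eq_bigr => t _.
  by rewrite inE; case: (Sd D t).
under eq_bigr do rewrite ffunE.
by rewrite -mulr_suml hs divff // pnatr_eq0 -lt0n.
Qed.

Lemma Pd_marg_blk (R : realType) (X : finType) (k : nat) (D Y : {set X}) (a b : X)
  (s : {ffun X -> 'I_k}) :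
  a \in Y -> b \in Y -> a \in D -> b \notin D ->
  (forall w, w \in Y -> w \in D -> w = a) ->
  marginal (Pd R k D) Y (swap_pattern a b s) = marginal (Pd R k D) Y s.
Proof.
move=> aY bY aD bD hY.
apply: (marg_reindex (blkK aD bD)); first by apply: Pd_inv; [exact: blkK | move=> t; exact: Sd_blk].
move=> t; apply/idP/idP; first exact: agree_blk.
move=> h; rewrite -[t](blkK aD bD); apply: agree_blk => //.
by rewrite swapK.
Qed.

Lemma Pd_UE (R : realType) (X : finType) (k : nat) (psi : {set {set X}}) (D : {set X}) :
  (0 < k)%N -> (forall A B, A \in psi -> B \in psi -> compatible A B) -> D \in psi ->
  UE psi (Pd R k D).
Proof.
move=> k0 hc DH; split; first exact: Pd_prob.
move=> Y a b [ab /imsetP [E EHY hab]] s; move: EHY; rewrite inE => /andP [EH _].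
have aE : a \in E :&: Y by rewrite -hab !inE eqxx.
have bE : b \in E :&: Y by rewrite -hab !inE eqxx orbT.
move: (aE) (bE); rewrite !inE => /andP [aE' aY] /andP [bE' bY].
have DE : forall x y, x \in D -> x \in E -> y \in E -> y \notin D -> D \subset E.
  move=> x y xD xE yE yD; case/or3P: (hc E D EH DH) => // h.
    by rewrite (subsetP h y yE) in yD.
  by rewrite (disjointFr h xE) in xD.
have wab : forall w, w \in Y -> w \in D -> D \subset E -> (w == a) || (w == b).
  move=> w wY wD hDE; have : w \in E :&: Y by rewrite inE (subsetP hDE w wD) wY.
  by rewrite -hab !inE.
case: (boolP (a \in D)) => aD; case: (boolP (b \in D)) => bD.
- apply: marg_swap_sym => //; apply: Pd_inv; first exact: swapK.
  by move=> t; apply: Sd_swap; rewrite aD bD.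
- apply: Pd_marg_blk => // w wY wD.
  by case/orP: (wab w wY wD (DE a b aD aE' bE' bD)) => /eqP // wb; rewrite wb (negPf bD) in wD.
- rewrite swap_patternC; apply: Pd_marg_blk => // w wY wD.
  by case/orP: (wab w wY wD (DE b a bD bE' aE' aD)) => /eqP // wa; rewrite wa (negPf aD) in wD.
- apply: marg_swap_sym => //; apply: Pd_inv; first exact: swapK.
  by move=> t; apply: Sd_swap; rewrite (negPf aD) (negPf bD).
Qed.

Lemma Pd_not_sym (R : realType) (X : finType) (k : nat) (D : {set X}) (x y z : X) :
  (1 < k)%N -> x \in D -> z \in D -> y \notin D -> x != z ->
  exists s, marginal (Pd R k D) [set x; y; z] (swap_pattern y z s)
            != marginal (Pd R k D) [set x; y; z] s.
Proof.
move=> hk xD zD yD xz.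
have k0 : (0 < k)%N by apply: ltnW.
pose one : 'I_k := Ordinal hk; pose zero : 'I_k := Ordinal k0.
pose s : {ffun X -> 'I_k} := [ffun w => if w == y then one else zero].
exists s.
have xy : x != y by apply: contraNneq yD => <-.
have zy : z != y by apply: contraNneq yD => <-.
have h0 : marginal (Pd R k D) [set x; y; z] (swap_pattern y z s) = 0.
  apply: big1 => t /forallP ht; rewrite ffunE.
  have xY : x \in [set x; y; z] by rewrite !inE eqxx.
  have zY : z \in [set x; y; z] by rewrite !inE eqxx !orbT.
  have hx := implyP (ht x) xY; have hz := implyP (ht z) zY.
  suff -> : Sd D t = false by rewrite mul0r.
  apply/negbTE; apply/negP => /andP [_ /forall_inP h].
  have := forall_inP (h x xD) z zD.
  move: hx hz; rewrite !ffunE (negPf xy) (negPf zy) eqxx (negPf xz) eqxx.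
  by move=> /eqP -> /eqP ->.
have Ss : Sd D s.
  apply/andP; split; first by apply/forallP => w; rewrite ffunE; case: ifP.
  apply/forall_inP => w wD; apply/forall_inP => w' w'D; rewrite !ffunE.
  have -> : (w == y) = false by apply/negbTE; apply: contraNneq yD => <-.
  by have -> : (w' == y) = false by apply/negbTE; apply: contraNneq yD => <-.
have n0 : (0 < #|[set t : {ffun X -> 'I_k} | Sd D t]|)%N.
  by apply/card_gt0P; exists s; rewrite inE.
have hp : 0 < marginal (Pd R k D) [set x; y; z] s.
  rewrite /marginal (bigD1 s) /=; last by apply/forallP => w; apply/implyP.
  apply: ltr_wpDr.
    by apply: sumr_ge0 => t _; rewrite ffunE divr_ge0 ?ler0n.
  by rewrite ffunE Ss mul1r invr_gt0 ltr0n.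
by rewrite h0 eq_sym gt_eqF.
Qed.

Lemma min_clust (X : finType) (H : {set {set X}}) (C : {set X}) :
  [set: X] \in H ->
  exists F, [/\ F \in H, C \subset F &
    forall G, G \in H -> C \subset G -> (#|F| <= #|G|)%N].
Proof.
move=> hT.
pose P := [pred F : {set X} | (F \in H) && (C \subset F)].
have P0 : P [set: X] by rewrite /P /= hT subsetT.
case: (@arg_minnP _ _ P (fun F : {set X} => #|F|) P0) => F /andP [FH CF] hmin.
by exists F; split => // G GH CG; apply: hmin; rewrite /P /= GH CG.
Qed.

Lemma split_min (X : finType) (H : {set {set X}}) (C F : {set X}) :
  is_rooted_binary_tree H -> F \in H -> C \subset F -> C != F -> C != set0 ->
  (forall G, G \in H -> C \subset G -> (#|F| <= #|G|)%N) ->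
  exists A B, [/\ A \in H, B \in H, [disjoint A & B], A :|: B = F &
     ~~ (C \subset A) /\ ~~ (C \subset B)].
Proof.
move=> [hT hS hN hc hb] FH CF CnF Cn0 hmin.
have F2 : (2 <= #|F|)%N.
  have : C \proper F by rewrite properEneq CnF CF.
  move/proper_card; have : (0 < #|C|)%N by rewrite card_gt0.
  by move=> h1 h2; apply: leq_ltn_trans h2.
have [A [B [AH BH dAB hAB]]] := hb F FH F2.
have ltA : (#|A| < #|F|)%N.
  apply: proper_card; rewrite properEneq -hAB subsetUl andbT.
  have [b bB] : exists b, b \in B.
    by apply/set0Pn; apply: hN.
  apply/eqP => eAB; move: (disjointFl dAB bB); rewrite eAB inE bB orbT.
  by [].
have ltB : (#|B| < #|F|)%N.
  apply: proper_card; rewrite properEneq -hAB subsetUr andbT.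
  have [a aA] : exists a, a \in A.
    by apply/set0Pn; apply: hN.
  apply/eqP => eAB; move: (disjointFr dAB aA); rewrite eAB inE aA.
  by [].
exists A, B; split => //; split.
  by apply/negP => CA; have := hmin A AH CA; rewrite leqNgt ltA.
by apply/negP => CB; have := hmin B BH CB; rewrite leqNgt ltB.
Qed.

Lemma sub_tree_eq (X : finType) (psi phi : {set {set X}}) :
  is_rooted_binary_tree psi -> is_rooted_binary_tree phi ->
  psi \subset phi -> phi \subset psi.
Proof.
move=> hpsi hphi sub; apply/subsetP => C Cphi.
apply/negPn/negP => Cpsi.
have [hT _ hN _ _] := hpsi.
have [_ _ hN' hc' _] := hphi.
have [F [FH CF hmin]] := min_clust C hT.
have CnF : C != F by apply: contraNneq Cpsi => ->.
have [A [B [AH BH dAB hAB [nCA nCB]]]] :=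
  split_min hpsi FH CF CnF (hN' C Cphi) hmin.
have AC : A \subset C.
  case/or3P: (hc' C A Cphi (subsetP sub A AH)) => // h; first by rewrite h in nCA.
  have : C \subset B.
    apply/subsetP => c cC; move: (subsetP CF c cC); rewrite -hAB inE.
    by rewrite (disjointFr h cC).
  by move=> CB; rewrite CB in nCB.
have BC : B \subset C.
  case/or3P: (hc' C B Cphi (subsetP sub B BH)) => // h; first by rewrite h in nCB.
  have : C \subset A.
    apply/subsetP => c cC; move: (subsetP CF c cC); rewrite -hAB inE.
    by rewrite (disjointFr h cC) orbF.
  by move=> CA; rewrite CA in nCA.
have FC : F \subset C by rewrite -hAB subUset AC BC.
by move: CnF; rewrite eqEsubset CF FC.
Qed.

Lemma exists_D (X : finType) (psi phi : {set {set X}}) :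
  is_rooted_binary_tree psi -> is_rooted_binary_tree phi -> phi != psi ->
  exists D, D \in psi /\ D \notin phi.
Proof.
move=> hpsi hphi ne.
case: (boolP (psi \subset phi)) => sub.
  have := sub_tree_eq hpsi hphi sub => sub'.
  by move: ne; rewrite eqEsubset sub sub'.
by case/subsetPn: sub => D DH Dn; exists D.
Qed.

Lemma triple_aux (X : finType) (phi : {set {set X}}) (D A B : {set X}) (y : X) :
  A \in phi -> B \in phi -> [disjoint A & B] -> D \subset A :|: B ->
  y \in B -> y \notin D -> ~~ (D \subset A) -> ~~ (D \subset B) ->
  exists x z, [/\ x \in D, z \in D, x != z & is_2clade phi [set x; y; z] y z].
Proof.
move=> AH BH dAB DAB yB yD nDA nDB.
case/subsetPn: nDB => x xD xB.
case/subsetPn: nDA => z zD zA.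
have xA : x \in A by move: (subsetP DAB x xD); rewrite inE (negPf xB) orbF.
have zB : z \in B by move: (subsetP DAB z zD); rewrite inE (negPf zA).
exists x, z; split => //; first by apply: contraNneq zA => <-.
split; first by apply: contraNneq yD => ->.
have eq : [set y; z] = B :&: [set x; y; z].
  apply/setP => w; rewrite !inE.
  case: (eqVneq w x) => [->|wx].
    have xy : (x == y) = false by apply/negbTE; apply: contraNneq yD => <-.
    have xz : (x == z) = false by apply/negbTE; apply: contraNneq zA => <-.
    by rewrite (negPf xB) xy xz.
  case: (eqVneq w y) => [->|wy]; first by rewrite yB.
  by case: (eqVneq w z) => [->|wz]; rewrite ?zB ?andbF.
apply/imsetP; exists B => //; rewrite inE BH /= -eq.
by apply/set0Pn; exists y; rewrite !inE eqxx.
Qed.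

Lemma triple (X : finType) (psi phi : {set {set X}}) (D : {set X}) :
  is_rooted_binary_tree psi -> is_rooted_binary_tree phi ->
  D \in psi -> D \notin phi ->
  exists x y z, [/\ x \in D, z \in D, y \notin D, x != z &
                 is_2clade phi [set x; y; z] y z].
Proof.
move=> hpsi hphi DH Dn.
have [_ _ hN _ _] := hpsi.
have [hT _ _ _ _] := hphi.
have [F [FH DF hmin]] := min_clust D hT.
have DnF : D != F by apply/eqP => eDF; rewrite eDF FH in Dn.
have [A [B [AH BH dAB hAB [nDA nDB]]]] := split_min hphi FH DF DnF (hN D DH) hmin.
have nFD : ~~ (F \subset D).
  by apply/negP => FD; move/negP: DnF; apply; rewrite eqEsubset DF FD.
case/subsetPn: nFD => y yF yD.
have DAB : D \subset A :|: B by rewrite hAB.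
move: yF; rewrite -hAB inE => /orP [yA|yB].
  have dBA : [disjoint B & A] by rewrite disjoint_sym.
  have DBA : D \subset B :|: A by rewrite setUC.
  have [x [z [? ? ? ?]]] := triple_aux BH AH dBA DBA yA yD nDB nDA.
  by exists x, y, z.
have [x [z [? ? ? ?]]] := triple_aux AH BH dAB DAB yB yD nDA nDB.
by exists x, y, z.
Qed.

Lemma clade_in (X : finType) (H : {set {set X}}) (Y : {set X}) (a b : X) :
  is_2clade H Y a b -> a \in Y /\ b \in Y.
Proof.
move=> [_ /imsetP [E _ hab]].
have : a \in E :&: Y by rewrite -hab !inE eqxx.
have : b \in E :&: Y by rewrite -hab !inE eqxx orbT.
by rewrite !inE => /andP [_ ->] /andP [_ ->].
Qed.

Definition Unif (R : realType) (X : finType) (k : nat) : tensor R X k :=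
  [ffun _ => (#|{ffun X -> 'I_k}|%:R)^-1].

Lemma Unif_UE (R : realType) (X : finType) (k : nat) (H : {set {set X}}) :
  (0 < k)%N -> UE H (Unif R X k).
Proof.
move=> k0; split.
  split; first by move=> t; rewrite ffunE invr_ge0 ler0n.
  under eq_bigr do rewrite ffunE.
  rewrite sumr_const.
  change ((#|{ffun X -> 'I_k}|%:R)^-1 *+ #|{ffun X -> 'I_k}| = 1 :> R).
  rewrite -[LHS]mulr_natr mulVf // pnatr_eq0 -lt0n.
  by apply/card_gt0P; exists [ffun _ => Ordinal k0].
move=> Y a b /clade_in [aY bY] s.
by apply: marg_swap_sym => // t; rewrite !ffunE.
Qed.

Lemma marg_aff (R : realType) (X : finType) (k d : nat) (c : tensor R X k)
  (e : 'I_d -> tensor R X k) (v : 'rV[R]_d) (Y : {set X}) (s : {ffun X -> 'I_k}) :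
  marginal (affine_map c e v) Y s = marginal c Y s + \sum_(i < d) v 0 i * marginal (e i) Y s.
Proof.
rewrite /marginal; under eq_bigr do rewrite ffunE.
rewrite big_split /=; congr (_ + _); rewrite exchange_big /=.
by apply: eq_bigr => i _; rewrite mulr_sumr.
Qed.

Lemma aff_bound (R : realType) (X : finType) (k d : nat) (c : tensor R X k)
  (e : 'I_d -> tensor R X k) :
  injective (affine_map c e) ->
  exists C : R, 0 < C /\ forall v : 'rV[R]_d,
    (forall t, 0 <= affine_map c e v t <= 1) -> forall i, `|v 0 i| <= C.
Proof.
move=> inj.
pose E : 'M[R]_(d, #|{ffun X -> 'I_k}|) := \matrix_(i, j) e i (enum_val j).
have hE : forall v j, (v *m E) 0 j = affine_map c e v (enum_val j) - c (enum_val j).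
  move=> v j; rewrite !mxE ffunE addrC addKr.
  by apply: eq_bigr => i _; rewrite mxE.
have fr : row_free E.
  apply: inj_row_free => v hv.
  have : affine_map c e v = affine_map c e 0.
    apply/ffunP => t; have := hE v (enum_rank t); rewrite hv mxE enum_rankK.
    move/eqP; rewrite eq_sym subr_eq0 => /eqP ->.
    by rewrite !ffunE big1 ?addr0 // => i _; rewrite mxE mul0r.
  by move/inj.
case/row_freeP: fr => B hB.
pose C : R := 1 + \sum_(i < d) \sum_j (1 + `|c (enum_val j)|) * `|B j i|.
have C0 : forall i, 0 <= \sum_j (1 + `|c (enum_val j)|) * `|B j i|.
  by move=> i; apply: sumr_ge0 => j _; apply: mulr_ge0 => //; apply: addr_ge0.
exists C; split.
  by apply: ltr_wpDr; [apply: sumr_ge0 => i _; apply: C0 | apply: ltr01].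
move=> v hv i.
have vE : v = (v *m E) *m B by rewrite -mulmxA hB mulmx1.
apply: (le_trans _ (_ : \sum_j (1 + `|c (enum_val j)|) * `|B j i| <= C)); last first.
  rewrite /C (bigD1 i) //= addrA [1 + _]addrC -addrA lerDl; apply: addr_ge0 => //.
  by apply: sumr_ge0 => i' _; apply: C0.
rewrite {1}vE mxE.
apply: (le_trans (ler_norm_sum _ _ _)); apply: ler_sum => j _.
rewrite normrM ler_wpM2r // hE.
apply: (le_trans (ler_normB _ _)); apply: lerD => //.
have /andP [h0 h1] := hv (enum_val j).
by rewrite ger0_norm.
Qed.
Lemma grid_pick_nat (R : realType) (dl t : R) (M : nat) :
  0 < dl -> (0 < M)%N -> 0 <= t -> t <= M%:R * dl ->
  exists m : nat, [/\ (m < M)%N, m%:R * dl <= t & t <= (m%:R + 1) * dl].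
Proof.
move=> dl0; elim: M => // M IH _ t0 tM.
case: (posnP M) => [M0|Mpos].
  exists 0%N; split => //; first by rewrite mul0r.
  by rewrite add0r; move: tM; rewrite M0.
case: (leP t (M%:R * dl)) => htM.
  by have [m [mM h1 h2]] := IH Mpos t0 htM; exists m; split => //; apply: ltnW.
exists M; split => //; first exact: ltW.
by move: tM; rewrite -natr1.
Qed.

Lemma sum_prefix (R : realType) (F : nat -> R) (n N : nat) :
  (forall m, 0 <= F m) -> (forall m, (n <= m)%N -> F m = 0) ->
  \sum_(m < N) F m <= \sum_(m < n) F m.
Proof.
move=> F0 Fn; rewrite -!(big_mkord xpredT).
case: (leqP N n) => hNn.
  rewrite (big_cat_nat (leq0n N) hNn) /= lerDl.
  by apply: sumr_ge0 => m _.
rewrite (big_cat_nat (leq0n n) (ltnW hNn)) /= [X in _ + X]big1_seq ?addr0 //.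
by move=> m /andP [_]; rewrite mem_index_iota => /andP [hm _]; apply: Fn.
Qed.

Lemma vol00 (R : realType) (d : nat) (j : 'I_d) : box_vol (0 : 'rV[R]_d) 0 = 0.
Proof. by rewrite /box_vol (bigD1 j) //= !mxE subrr mul0r. Qed.

Lemma hyper_null (R : realType) (d : nat) (A : 'rV[R]_d -> Prop) (C al : R)
  (be : 'I_d -> R) (j : 'I_d) :
  0 < C -> be j != 0 ->
  (forall v, A v -> (forall i, `|v 0 i| <= C) /\ al + \sum_i be i * v 0 i = 0) ->
  lebesgue_null A.
Proof.
move=> C0 bj0 hA eps eps0.
pose K := (\sum_i `|be i|) / `|be j|.
have K0 : 0 <= K by rewrite divr_ge0 // sumr_ge0.
pose L := \prod_(i | i != j) (2 * C).
have L0 : 0 <= L by apply: prodr_ge0 => i _; rewrite mulr_ge0 // ltW.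
pose Q := 2 * K * (2 * C) * L / eps.
have P0 : 0 <= 2 * K * (2 * C) * L.
  apply: mulr_ge0 => //; apply: mulr_ge0; last lra.
  by apply: mulr_ge0 => //; lra.
have Q0 : 0 <= Q by apply: divr_ge0 => //; apply: ltW.
pose M := (Num.Def.archi_bound Q).+1.
have M0 : (0 < M)%N by [].
have QM : Q < M%:R.
  apply: (lt_le_trans (archi_boundP Q0)); rewrite ler_nat; exact: leqnSn.
have Mpos : 0 < M%:R :> R by rewrite ltr0n.
pose dl := 2 * C / M%:R.
have dl0 : 0 < dl by rewrite divr_gt0 // mulr_gt0.
have Mdl : M%:R * dl = 2 * C by rewrite /dl mulrC divfK // gt_eqF.
pose r := K * dl.
have r0 : 0 <= r by rewrite mulr_ge0 // ltW.
pose T := {ffun 'I_d -> 'I_M}.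
pose corner (z : T) i := - C + (z i)%:R * dl.
pose h (z : T) := - (al + \sum_(i | i != j) be i * corner z i) / be j.
pose a (z : T) : 'rV[R]_d := \row_i (if i == j then h z - r else corner z i).
pose b (z : T) : 'rV[R]_d := \row_i (if i == j then
   (if (z j == 0 :> nat) then h z + r else h z - r) else corner z i + dl).
pose w (i : 'I_d) (m : 'I_M) : R :=
  if i == j then (if (m == 0 :> nat) then 2 * r else 0) else dl.
have wab : forall z i, b z 0 i - a z 0 i = w i (z i).
  move=> z i; rewrite /w !mxE; case: (eqVneq i j) => [->|_].
    by case: ifP => _; [lra | lra].
  lra.
have w0 : forall i m, 0 <= w i m.
  by move=> i m; rewrite /w; case: ifP => _; [case: ifP => _; lra | lra].
have ab : forall z i, a z 0 i <= b z 0 i.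
  by move=> z i; rewrite -subr_ge0 wab.
have vol : forall z, box_vol (a z) (b z) = \prod_i w i (z i).
  by move=> z; apply: eq_bigr => i _; rewrite wab.
pose z0 : T := [ffun _ => Ordinal M0].
pose aa n := if (n < #|T|)%N then a (nth z0 (enum T) n) else 0.
pose bb n := if (n < #|T|)%N then b (nth z0 (enum T) n) else 0.
exists aa, bb; split.
- move=> n i; rewrite /aa /bb; case: ifP => _; first exact: ab.
  by rewrite mxE.
- move=> v /hA [hb hs].
  have hpick : forall i : 'I_d, exists m : 'I_M,
      (m%:R * dl <= v 0 i + C) /\ (v 0 i + C <= (m%:R + 1) * dl).
    move=> i; have := hb i; rewrite ler_norml => /andP [h1 h2].
    have t0 : 0 <= v 0 i + C by lra.
    have tM : v 0 i + C <= M%:R * dl by rewrite Mdl; lra.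
    have [m [mM m1 m2]] := grid_pick_nat dl0 M0 t0 tM.
    by exists (Ordinal mM).
  have [f hf] := fin_all_exists hpick.
  pose z : T := [ffun i => if i == j then Ordinal M0 else f i].
  have zin : z \in enum T by rewrite mem_enum.
  exists (index z (enum T)).
  have hn : (index z (enum T) < #|T|)%N by rewrite cardE index_mem.
  rewrite /aa /bb hn nth_index //.
  have ecorner : forall i, i != j -> `|v 0 i - corner z i| <= dl.
    move=> i ij; rewrite /corner /z ffunE (negPf ij) ler_norml.
    have [h1 h2] := hf i; rewrite mulrDl mul1r in h2; apply/andP; split; lra.
  have key : `|v 0 j - h z| <= r.
    rewrite (bigD1 j) //= in hs.
    have hh : be j * h z = - (al + \sum_(i | i != j) be i * corner z i).
      by rewrite /h; field.
    have e1 : be j * (v 0 j - h z) = - \sum_(i | i != j) be i * (v 0 i - corner z i).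
      under eq_bigr do rewrite mulrBr.
      rewrite sumrB mulrBr hh; lra.
    have bj : 0 < `|be j| by rewrite normr_gt0.
    rewrite -(ler_pM2l bj) -normrM e1 normrN.
    apply: (le_trans (ler_norm_sum _ _ _)).
    apply: (@le_trans _ _ (\sum_(i | i != j) `|be i| * dl)).
      apply: ler_sum => i ij; rewrite normrM; apply: ler_wpM2l => //.
      exact: ecorner.
    have -> : `|be j| * r = \sum_i `|be i| * dl.
      by rewrite /r /K -mulr_suml; field; rewrite normr_eq0.
    rewrite [X in _ <= X](bigD1 j) //= lerDr.
    by apply: mulr_ge0 => //; apply: ltW.
  move=> i; rewrite !mxE.
  case: (eqVneq i j) => [->|ij].
    have -> : (z j == 0 :> nat) by rewrite /z ffunE eqxx.
    by rewrite -ler_distl.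
  rewrite /corner /z ffunE (negPf ij).
  have [h1 h2] := hf i; rewrite mulrDl mul1r in h2; apply/andP; split; lra.
- move=> N.
  have F0 : forall n, 0 <= box_vol (aa n) (bb n).
    move=> n; rewrite /aa /bb; case: ifP => _; last by rewrite (vol00 _ j).
    by rewrite vol; apply: prodr_ge0 => i _; apply: w0.
  have Fn : forall n, (#|T| <= n)%N -> box_vol (aa n) (bb n) = 0.
    by move=> n hn; rewrite /aa /bb ltnNge hn /= (vol00 _ j).
  apply: (le_trans (@sum_prefix R (fun n => box_vol (aa n) (bb n)) #|T| N F0 Fn)).
  have -> : \sum_(n < #|T|) box_vol (aa n) (bb n) = \sum_(z : T) \prod_i w i (z i).
    rewrite -(big_mkord xpredT (fun n => box_vol (aa n) (bb n))).
    rewrite (eq_big_nat _ _ (F2 := fun n => box_vol (a (nth z0 (enum T) n)) (b (nth z0 (enum T) n)))); last first.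
      by move=> n /andP [_ hn]; rewrite /aa /bb hn.
    rewrite cardE -(big_nth z0 xpredT (fun z => box_vol (a z) (b z))) big_enum /=.
    by apply: eq_bigr => z _; rewrite vol.
  rewrite -bigA_distr_bigA (bigD1 j) //=.
  have Sj : \sum_m w j m = 2 * r.
    rewrite (bigD1 (Ordinal M0)) //= big1 => [|m hm]; first by rewrite /w eqxx /= addr0.
    rewrite /w eqxx; case: ifP => // /eqP m0.
    by move: hm; rewrite -val_eqE /= m0 eqxx.
  have Si : forall i, i != j -> \sum_m w i m = 2 * C.
    by move=> i ij; rewrite /w (negPf ij) sumr_const card_ord -[LHS]mulr_natl Mdl.
  rewrite Sj (eq_bigr (fun _ => 2 * C)) -/L; last by move=> i; apply: Si.
  have hP : 2 * K * (2 * C) * L < eps * M%:R.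
    by rewrite -ltr_pdivrMl // mulrC.
  have -> : 2 * r * L = (2 * K * (2 * C) * L) / M%:R.
    by rewrite /r /dl; field; rewrite gt_eqF.
  by rewrite ler_pdivrMr // ltW.
Qed.

Lemma prob_le1 (R : realType) (X : finType) (k : nat) (P : tensor R X k) t :
  is_prob_tensor P -> 0 <= P t <= 1.
Proof.
move=> [h0 h1]; rewrite h0 /= -h1 (bigD1 t) //= lerDl.
by apply: sumr_ge0.
Qed.

Unset Implicit Arguments.

Theorem theorem3p1 (R : realType) (k : nat) (X : finType)
    (psi phi : {set {set X}}) :
  (2 <= k)%N ->
  is_rooted_binary_tree psi ->
  is_rooted_binary_tree phi ->
  phi != psi ->
  forall (d : nat) (c : tensor R X k) (e : 'I_d -> tensor R X k),
    injective (affine_map c e) ->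
    (forall P : tensor R X k, UE psi P -> exists v, affine_map c e v = P) ->
    lebesgue_null (fun v : 'rV[R]_d =>
      UE psi (affine_map c e v) /\ UE phi (affine_map c e v)).
Proof.
move=> hk hpsi hphi ne d c e inj hcov.
have k0 : (0 < k)%N by apply: ltnW.
have [D [DH Dn]] := exists_D hpsi hphi ne.
have [x [y [z [xD zD yD xz hcl]]]] := triple hpsi hphi DH Dn.
have [_ _ _ hc _] := hpsi.
have PU := Pd_UE R k0 hc DH.
have [s hs] := Pd_not_sym R hk xD zD yD xz.
set Y := [set x; y; z] in hcl hs.
have [v0 hv0] := hcov _ PU.
have [v1 hv1] := hcov _ (@Unif_UE R X k psi k0).
pose al := marginal c Y (swap_pattern y z s) - marginal c Y s.
pose be i := marginal (e i) Y (swap_pattern y z s) - marginal (e i) Y s.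
have hg : forall v, marginal (affine_map c e v) Y (swap_pattern y z s)
    - marginal (affine_map c e v) Y s = al + \sum_i be i * v 0 i.
  move=> v; rewrite !marg_aff /al /be.
  under [X in _ = _ + X]eq_bigr do rewrite mulrBl.
  rewrite sumrB.
  have -> : \sum_(i < d) marginal (e i) Y (swap_pattern y z s) * v 0 i
      = \sum_(i < d) v 0 i * marginal (e i) Y (swap_pattern y z s).
    by apply: eq_bigr => i _; rewrite mulrC.
  have -> : \sum_(i < d) marginal (e i) Y s * v 0 i
      = \sum_(i < d) v 0 i * marginal (e i) Y s.
    by apply: eq_bigr => i _; rewrite mulrC.
  lra.
have g1 : al + \sum_i be i * v1 0 i = 0.
  by rewrite -hg hv1 ((@Unif_UE R X k phi k0).2 Y y z hcl s) subrr.
have g0 : al + \sum_i be i * v0 0 i != 0.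
  by rewrite -hg hv0 subr_eq0.
have [j bj] : exists j, be j != 0.
  case: (boolP [exists j, be j != 0]) => [/existsP [j bj]|/existsPn hall]; first by exists j.
  have hz : forall v : 'rV[R]_d, \sum_i be i * v 0 i = 0.
    by move=> v; apply: big1 => i _; rewrite (eqP (negPn (hall i))) mul0r.
  by move: g0 g1; rewrite !hz addr0 => /eqP.
have [C [C0 hC]] := aff_bound inj.
apply: (@hyper_null R d _ C al be j C0 bj) => v [hUpsi hUphi]; split.
  by apply: hC => t; apply: prob_le1; case: hUpsi.
by rewrite -hg; apply/eqP; rewrite subr_eq0; apply/eqP; apply: (hUphi.2 Y y z hcl s).
Qed.
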